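(* Let $X$ and $Y$ be complexes in $\mathcal{C}_{\mathcal{I}}(\mathcal{P}(\Lambda))$ such that $X^i=Y^i=0$ for all $i>0$, and suppose there is $t>0$ with $X^{-i}=0$ for all $i>t$ and $X^{-t}\neq 0$. If $f:X\to Y$ is an irreducible morphism, then $Y^{-k}=0$ for all $k\ge t+2$.
   Context: $\Lambda$ is a finite-dimensional non-semisimple algebra over a field $k$ and $\mathcal{P}(\Lambda)$ the category of finitely generated projective right $\Lambda$-modules. $\mathcal{C}_{\mathcal{I}}(\mathcal{P}(\Lambda))$ denotes the category of cochain complexes $(X^n,d^n)$, $d^n:X^n\to X^{n+1}$, of finitely generated projective $\Lambda$-modules whose differentials are radical (image contained in the radical of the target), with morphisms of complexes. A morphism is irreducible if it is neither a split monomorphism nor a split epimorphism and in any factorization $f=hg$ either $g$ is a split monomorphism or $h$ is a split epimorphism. *)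

(* Defs.v *)
From HB Require Import structures.
From mathcomp Require Import all_boot all_order all_algebra all_field.
Set Implicit Arguments. Unset Strict Implicit. Unset Printing Implicit Defensive.
Import GRing.Theory.
Local Open Scope ring_scope.

Section Defs.
Variables (F : fieldType) (L : falgType F).

(* A finite-dimensional right L-module, realised on row vectors 'rV[F]_rdim,
   with right action  v . a := v *m ract a. *)
Record rmod := RMod {
  rdim : nat;
  ract : L -> 'M[F]_rdim;
  ract_lin : forall (c : F) (a b : L), ract (c *: a + b) = c *: ract a + ract b;
  ract1 : ract 1 = 1%:M;
  ractM : forall a b : L, ract (a * b) = ract a *m ract b }.

(* Module homomorphisms M -> N are the matrices A acting by v |-> v *m A
   that commute with the action. *)
Definition is_hom (M N : rmod) (A : 'M[F]_(rdim M, rdim N)) :=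
  forall a : L, ract M a *m A = A *m ract N a.

(* Submodules of M (given by row spaces of square matrices). *)
Definition submod (M : rmod) (U : 'M[F]_(rdim M)) :=
  forall a : L, (U *m ract M a <= U)%MS.

Definition maxsubmod (M : rmod) (U : 'M[F]_(rdim M)) :=
  [/\ submod U, ~~ ((1%:M : 'M[F]_(rdim M)) <= U)%MS &
      forall V : 'M[F]_(rdim M), submod V -> (U <= V)%MS ->
        (V <= U)%MS \/ ((1%:M : 'M[F]_(rdim M)) <= V)%MS].

(* The image of A is contained in rad N = intersection of maximal submodules. *)
Definition radical_hom (M N : rmod) (A : 'M[F]_(rdim M, rdim N)) :=
  forall U : 'M[F]_(rdim N), maxsubmod U -> (A <= U)%MS.

Definition projective (P : rmod) :=
  forall (M N : rmod) (g : 'M[F]_(rdim M, rdim N)), is_hom g -> row_full g ->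
  forall h : 'M[F]_(rdim P, rdim N), is_hom h ->
  exists2 l : 'M[F]_(rdim P, rdim M), is_hom l & l *m g = h.

Record cplx := Cplx {
  cobj : int -> rmod;
  cdiff : forall n : int, 'M[F]_(rdim (cobj n), rdim (cobj (n + 1))) }.

Definition in_CI (X : cplx) :=
  forall n : int, [/\ projective (cobj X n), is_hom (cdiff X n),
                     radical_hom (cdiff X n) &
                     cdiff X n *m cdiff X (n + 1) = 0].

Definition cmap (X Y : cplx) :=
  forall n : int, 'M[F]_(rdim (cobj X n), rdim (cobj Y n)).

Definition is_cmor (X Y : cplx) (f : cmap X Y) :=
  forall n : int, is_hom (f n) /\ cdiff X n *m f (n + 1) = f n *m cdiff Y n.

Definition split_mono (X Y : cplx) (g : cmap X Y) :=
  exists r : cmap Y X, is_cmor r /\ forall n, g n *m r n = 1%:M.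

Definition split_epi (X Y : cplx) (h : cmap X Y) :=
  exists s : cmap Y X, is_cmor s /\ forall n, s n *m h n = 1%:M.

(* Irreducible morphism in C_I(P(L)); the composite "h after g" is the
   pointwise matrix product g n *m h n. *)
Definition irreducible (X Y : cplx) (f : cmap X Y) :=
  [/\ is_cmor f, ~ split_mono f, ~ split_epi f &
      forall Z : cplx, in_CI Z ->
      forall (g : cmap X Z) (h : cmap Z Y), is_cmor g -> is_cmor h ->
      (forall n, f n = g n *m h n) -> split_mono g \/ split_epi h].

Definition rideal (I : {vspace L}) := forall a b : L, a \in I -> a * b \in I.

Definition max_rideal (I : {vspace L}) :=
  [/\ rideal I, I != fullv &
      forall J : {vspace L}, rideal J -> (I <= J)%VS -> J = I \/ J = fullv].

Definition non_semisimple :=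
  exists2 a : L, a != 0 & forall I : {vspace L}, max_rideal I -> a \in I.

End Defs.

(* Main.v *)
Require Import Defs.
From mathcomp Require Import all_boot all_order all_algebra all_field.
From mathcomp Require Import zify.
Set Implicit Arguments. Unset Strict Implicit. Unset Printing Implicit Defensive.
Import GRing.Theory.
Local Open Scope ring_scope.

Section Aux.
Variables (F : fieldType) (L : falgType F).

Lemma mx_dim0r m n (A : 'M[F]_(m,n)) : m = 0%N -> A = 0.
Proof. by move=> Hm; subst m; apply/matrixP=> [[]]. Qed.

Lemma mx_dim0c m n (A : 'M[F]_(m,n)) : n = 0%N -> A = 0.
Proof. by move=> Hm; subst n; apply/matrixP=> i [[]]. Qed.

Lemma one0_dim m : (1%:M : 'M[F]_m) = 0 -> m = 0%N.
Proof.
case: m => // m; move/matrixP => /(_ ord0 ord0); rewrite !mxE /= => /eqP.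
by rewrite oner_eq0.
Qed.

Definition rmod0 : rmod L.
Proof.
refine (@RMod F L 0 (fun _ => 0) _ _ _).
- by move=> c a b; rewrite scaler0 addr0.
- by apply/matrixP => [[]].
- by move=> a b; rewrite mul0mx.
Defined.

Definition mask (b : bool) (M : rmod L) := if b then M else rmod0.

Definition maskmx (b1 b2 : bool) (M N : rmod L) (A : 'M[F]_(rdim M, rdim N)) :
  'M[F]_(rdim (mask b1 M), rdim (mask b2 N)) :=
  match b1 as c1 return 'M[F]_(rdim (mask c1 M), rdim (mask b2 N)) with
  | true => match b2 as c2 return 'M[F]_(rdim (mask true M), rdim (mask c2 N)) with
            | true => A | false => 0 end
  | false => 0 end.

Definition unmask (b : bool) (M N : rmod L) (A : 'M[F]_(rdim (mask b M), rdim N)) :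
  'M[F]_(rdim M, rdim N) :=
  match b as c return 'M[F]_(rdim (mask c M), rdim N) -> 'M[F]_(rdim M, rdim N) with
  | true => fun A => A | false => fun _ => 0 end A.

Lemma proj0 : projective rmod0.
Proof.
move=> M N g _ _ h _; exists 0.
  by move=> a; rewrite mulmx0 mul0mx.
by rewrite mul0mx; apply/esym/mx_dim0r.
Qed.

Definition bZ (t : nat) (n : int) : bool := (- (t%:Z + 1) <= n)%R.

Definition Zc (t : nat) (Y : cplx L) : cplx L :=
  @Cplx F L (fun n => mask (bZ t n) (cobj Y n))
       (fun n => maskmx (bZ t n) (bZ t (n+1)) (cdiff Y n)).

End Aux.

Theorem proposition8 (F : fieldType) (L : falgType F) (X Y : cplx L)
  (t : nat) (f : cmap X Y) :
  non_semisimple L -> in_CI X -> in_CI Y ->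
  (forall i : int, 0 < i -> rdim (cobj X i) = 0%N) ->
  (forall i : int, 0 < i -> rdim (cobj Y i) = 0%N) ->
  (0 < t)%N ->
  (forall i : nat, (t < i)%N -> rdim (cobj X (- i%:Z)) = 0%N) ->
  rdim (cobj X (- t%:Z)) != 0%N ->
  irreducible f ->
  forall k : nat, (t.+2 <= k)%N -> rdim (cobj Y (- k%:Z)) = 0%N.
Proof.
move=> _ CIX CIY _ _ _ HX _ [fmor nsm nse irr] k Hk.
have X0 : forall m : int, m < - t%:Z -> rdim (cobj X m) = 0%N.
  case=> p Hp; first by exfalso; lia.
  by rewrite NegzE; apply: HX; lia.
have bS : forall n, bZ t n -> bZ t (n + 1) by move=> n; rewrite /bZ; lia.
have bF : forall n, bZ t n = false -> n < - t%:Z by move=> n; rewrite /bZ; lia.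
have bFT : forall n, bZ t n = false -> bZ t (n+1) = true -> n + 1 < - t%:Z.
  by move=> n; rewrite /bZ; lia.
pose Z := Zc t Y.
have CIZ : in_CI Z.
  move=> n; have [P1 P2 P3 P4] := CIY n; rewrite /Z /=.
  have [P1' P2' P3' P4'] := CIY (n+1).
  move: (bS n) (bS (n+1)).
  case: (bZ t n); case: (bZ t (n+1)); case: (bZ t (n+1+1)) => //= H1 H2;
    try (by have := H1 erefl); try (by have := H2 erefl);
    split => //; try exact: proj0;
    try (by move=> a; rewrite mulmx0 mul0mx);
    try (by move=> U _; rewrite sub0mx);
    by rewrite ?mulmx0 ?mul0mx.
pose g : cmap X Z := fun n => maskmx true (bZ t n) (f n).
pose h : cmap Z Y := fun n => maskmx (bZ t n) true (1%:M : 'M[F]_(rdim (cobj Y n))).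
have gmor : is_cmor g.
  move=> n; have [F1 F2] := fmor n; rewrite /g /Z /=.
  move: (bS n) (bF n) (bFT n).
  case: (bZ t n); case: (bZ t (n+1)) => //= H1 H2 H3;
    try (by have := H1 erefl);
    split => //; try (by move=> a; rewrite mulmx0 mul0mx);
    rewrite ?mulmx0 ?mul0mx //.
  by apply: mx_dim0r; apply: X0; apply: H2.
have hmor : is_cmor h.
  move=> n; rewrite /h /Z /=.
  move: (bS n).
  case: (bZ t n); case: (bZ t (n+1)) => //= H1;
    try (by have := H1 erefl);
    split => //; try (by move=> a; rewrite mulmx0 mul0mx);
    try (by move=> a; rewrite mulmx1 mul1mx);
    rewrite ?mulmx0 ?mul0mx ?mulmx1 ?mul1mx //.
have fgh : forall n, f n = g n *m h n.
  move=> n; rewrite /g /h /=; move: (bF n).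
  case: (bZ t n) => /= H; first by rewrite mulmx1.
  by rewrite mul0mx; apply: mx_dim0r; apply: X0; apply: H.
case: (irr Z CIZ g h gmor hmor fgh) => [[r [rmor Hr]] | [s [smor Hs]]].
  exfalso; apply: nsm.
  exists (fun n => unmask (r n)); split.
    move=> n; have [R1 R2] := rmor n; move: R1 R2.
    rewrite /Z /Zc /=.
    move: (bS n) (bF n) (bFT n)
      (r n : 'M_(rdim (mask (bZ t n) (cobj Y n)), rdim (cobj X n)))
      (r (n+1) : 'M_(rdim (mask (bZ t (n+1)) (cobj Y (n+1))), rdim (cobj X (n+1)))).
    case: (bZ t n); case: (bZ t (n+1)) => //= H1 H2 H3 rn rn1 R1 R2;
      try (by have := H1 erefl);
      split => //; try (by move=> a; rewrite mulmx0 mul0mx);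
      rewrite ?mulmx0 ?mul0mx //.
    by apply: mx_dim0c; apply: X0; apply: H3.
  move=> n; move: (Hr n); rewrite /g /Z /Zc /=; move: (bF n)
      (r n : 'M_(rdim (mask (bZ t n) (cobj Y n)), rdim (cobj X n))).
  case: (bZ t n) => //= H rn _.
  by rewrite mulmx0; apply/esym/mx_dim0r; apply: X0; apply: H.
have bk : bZ t (- k%:Z) = false by rewrite /bZ; lia.
have := Hs (- k%:Z); rewrite /h /Z /Zc /=.
move: (s (-k%:Z) : 'M_(rdim (cobj Y (-k%:Z)), rdim (mask (bZ t (-k%:Z)) (cobj Y (-k%:Z))))).
rewrite bk /= => sk; rewrite mulmx0 => /esym; exact: one0_dim.
Qed.
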